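(* Let $Z_1,Z_2,\ldots$ be i.i.d. from a distribution $\mathcal{D}$ on $\mathbb{Z}$, let $\ell:\Theta\times\mathbb{Z}\to[0,\infty)$ be a loss with risk $R(\theta)=\mathbb{E}_{Z\sim\mathcal{D}}\ell(\theta;Z)$ and risk minimizer $\theta^*=\arg\min_\theta R(\theta)$. Suppose the strong central condition holds with learning rate $\bar\omega$, and take $\omega\in[0,\bar\omega)$. Let $G_n$ denote either the online GUe-value $G_{n,\mathrm{on}}$ or the offline GUe-value $G_{n,\mathrm{off}}$ with learning rate $\omega$. Fix $\alpha\in(0,1)$. For $\Theta_0\subseteq\Theta$ let $G_n(\Theta_0)=\inf_{\theta\in\Theta_0}G_n(\theta)$, and consider the test that rejects $H_0:\theta^*\in\Theta_0$ in favor of $H_1:\theta^*\notin\Theta_0$ iff $G_n(\Theta_0)\ge\alpha^{-1}$. Then $$\Pr\{G_n(\Theta_0)\ge\alpha^{-1}\}\le\alpha\quad\text{for all }\Theta_0\text{ containing }\theta^*,$$ and the set $C_\alpha(Z^n)=\{\theta\in\Theta: G_n(\theta)<\alpha^{-1}\}$ satisfies $\Pr\{C_\alpha(Z^n)\ni\theta^*\}\ge1-\alpha$. Furthermore, for the online GUe-value, for any stopping time $\tau$, $$\Pr\{G_\tau(\Theta_0)\ge\alpha^{-1}\}\le\alpha\quad\text{and}\quad\Pr\{C_\alpha(Z^\tau)\ni\theta^*\}\ge1-\alpha.$$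
   Context: Empirical risk over a sub-sample $T$ of size $m$: $\widehat R_T(\theta)=m^{-1}\sum_{Z\in T}\ell(\theta;Z)$, and $\widehat R_n=\widehat R_{Z^n}$. An $(\varepsilon,\delta)$-AERM on $T$ ($\varepsilon,\delta\ge0$ fixed) is an estimator $\widehat\theta_T$ with $\widehat R_T(\widehat\theta_T)\le\inf_\theta\widehat R_T(\theta)+\delta/m^{1+\varepsilon}$; an AERM is one for some such constants. Online GUe-value: $G_{n,\mathrm{on}}(\theta)=\exp[-\omega\sum_{i=1}^n\{\ell(\widehat\theta_{i-1};Z_i)-\ell(\theta;Z_i)\}]$, where $\widehat\theta_k$ ($k\ge1$) is any AERM on $Z^k=(Z_1,\ldots,Z_k)$ and $\widehat\theta_0$ is a fixed constant. Offline GUe-value: partition the sample $S=Z^n$ as $S_1\sqcup S_2$ with sizes $n_1,n_2$, let $\widehat\theta_{S_1}$ be any AERM on $S_1$, and set $G_{n,\mathrm{off}}(\theta)=\exp[-\omega n_2\{\widehat R_{S_2}(\widehat\theta_{S_1})-\widehat R_{S_2}(\theta)\}]$. Strong central condition with learning rate $\bar\omega>0$: $\mathbb{E}_{Z\sim\mathcal{D}}\exp[-\omega\{\ell(\theta;Z)-\ell(\theta^*;Z)\}]\le1$ for all $\theta\in\Theta$ and all $\omega\in[0,\bar\omega)$. *)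

(* Defs.v *)
From HB Require Import structures.
From mathcomp Require Import all_boot all_order all_algebra.
From mathcomp Require Import all_classical all_reals all_analysis.
Set Implicit Arguments. Unset Strict Implicit. Unset Printing Implicit Defensive.
Import Order.TTheory GRing.Theory Num.Theory.
Local Open Scope classical_set_scope.
Local Open Scope ring_scope.

Section GUe.
Context {R : realType} {Th Zsp Om : Type}.

(* sample Z^k = (Z_1, ..., Z_k); Z_i is represented by [Z (i-1)] *)
Definition sample (Z : nat -> Om -> Zsp) (k : nat) (w : Om) : seq Zsp :=
  [seq Z j w | j <- iota 0 k].

Definition emp_risk (l : Th -> Zsp -> R) (T : seq Zsp) (th : Th) : R :=
  (size T)%:R^-1 * \sum_(z <- T) l th z.

Definition is_AERM_with (l : Th -> Zsp -> R) (est : seq Zsp -> Th) (eps delta : R) :=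
  forall T : seq Zsp, (0 < size T)%N ->
    emp_risk l T (est T) <=
      inf [set emp_risk l T th | th in [set: Th]] + delta / ((size T)%:R `^ (1 + eps)).

Definition is_AERM (l : Th -> Zsp -> R) (est : seq Zsp -> Th) :=
  exists eps delta : R, 0 <= eps /\ 0 <= delta /\ is_AERM_with l est eps delta.

Definition est_on (est : seq Zsp -> Th) (theta0 : Th) (Z : nat -> Om -> Zsp)
  (k : nat) (w : Om) : Th :=
  if k == 0%N then theta0 else est (sample Z k w).

Definition G_on (l : Th -> Zsp -> R) (est : seq Zsp -> Th) (theta0 : Th) (om : R)
  (Z : nat -> Om -> Zsp) (n : nat) (th : Th) (w : Om) : R :=
  expR (- om * \sum_(i < n)
          (l (est_on est theta0 Z i w) (Z i w) - l th (Z i w))).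

Definition subsample (Z : nat -> Om -> Zsp) (n : nat) (I : {set 'I_n}) (w : Om) : seq Zsp :=
  [seq Z (nat_of_ord i) w | i <- enum I].

Definition G_off (l : Th -> Zsp -> R) (est : seq Zsp -> Th) (om : R)
  (Z : nat -> Om -> Zsp) (n : nat) (I1 : {set 'I_n}) (th : Th) (w : Om) : R :=
  let S1 := subsample Z I1 w in
  let S2 := subsample Z (~: I1) w in
  expR (- om * (#|~: I1|)%:R *
          (emp_risk l S2 (est S1) - emp_risk l S2 th)).

Definition G_set (G : Th -> R) (Th0 : set Th) : R := inf [set G th | th in Th0].

End GUe.

Section Prob.
Context {R : realType} {dO dZ : measure_display}
  {Om : measurableType dO} {Zsp : measurableType dZ}.

Definition gen_sigma (Z : nat -> Om -> Zsp) (J : set nat) : set (set Om) :=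
  <<s [set A | exists j (B : set Zsp), J j /\ measurable B /\ A = Z j @^-1` B] >>.

Definition mutually_independent (P : probability Om R) (Z : nat -> Om -> Zsp) :=
  forall (J : seq nat) (B : nat -> set Zsp), uniq J ->
    (forall j, j \in J -> measurable (B j)) ->
    P (\bigcap_(j in [set j | j \in J]) (Z j @^-1` B j)) =
    (\prod_(j <- J) P (Z j @^-1` B j))%E.

Definition iid (P : probability Om R) (Z : nat -> Om -> Zsp) (D : probability Zsp R) :=
  (forall i, measurable_fun setT (Z i)) /\
  mutually_independent P Z /\
  (forall i (B : set Zsp), measurable B -> P (Z i @^-1` B) = D B).

Definition stopping_time (Z : nat -> Om -> Zsp) (tau : Om -> nat) :=
  forall k : nat, gen_sigma Z [set j | (j < k)%N] (tau @^-1` [set k]).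

Definition outer_prob_le (P : probability Om R) (E : set Om) (a : R) :=
  exists A : set Om, measurable A /\ E `<=` A /\ (P A <= a%:E)%E.

End Prob.

(* Main.v *)
Require Import Defs.
From HB Require Import structures.
From mathcomp Require Import all_boot all_order all_algebra.
From mathcomp Require Import all_classical all_reals all_analysis.
From mathcomp Require Import measurable_realfun lebesgue_integral probability.
Import Order.TTheory GRing.Theory Num.Theory.
Local Open Scope classical_set_scope.
Local Open Scope ring_scope.
Set Implicit Arguments. Unset Strict Implicit. Unset Printing Implicit Defensive.
Section pisys.
Context (R : realType) (dO dZ : measure_display)
  (Om : measurableType dO) (Zsp : measurableType dZ).
Variables (P : probability Om R) (Z : nat -> Om -> Zsp) (D : probability Zsp R).

Definition gens (J : set nat) : set (set Om) :=
  [set A | exists j (B : set Zsp), J j /\ measurable B /\ A = Z j @^-1` B].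

Lemma gen_sigmaE J : gen_sigma Z J = <<s gens J >>.
Proof. by []. Qed.

Definition pis (J : set nat) : set (set Om) :=
  [set A | exists (s : seq nat) (B : nat -> set Zsp), uniq s /\
     (forall j, j \in s -> J j /\ measurable (B j)) /\
     A = \bigcap_(j in [set j | j \in s]) (Z j @^-1` B j)].

Lemma bigcap_cons (j : nat) (s : seq nat) (B : nat -> set Zsp) :
  \bigcap_(i in [set i | i \in j :: s]) (Z i @^-1` B i) =
  Z j @^-1` B j `&` \bigcap_(i in [set i | i \in s]) (Z i @^-1` B i).
Proof.
apply/seteqP; split => w.
  move=> h; split; first by apply: h; rewrite /= inE eqxx.
  by move=> i /= si; apply: h; rewrite /= inE si orbT.
move=> [h1 h2] i /=; rewrite inE => /orP[/eqP->//|si]; exact: h2.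
Qed.

Lemma bigcap_nil (B : nat -> set Zsp) :
  \bigcap_(i in [set i | i \in [::]]) (Z i @^-1` B i) = setT.
Proof. by apply/seteqP; split => w // _ i /=; rewrite in_nil. Qed.

Lemma pisT J : pis J setT.
Proof.
exists [::], (fun _ => setT); split => //; split => //.
by rewrite bigcap_nil.
Qed.

Lemma pis_sub_gen J : pis J `<=` <<s gens J >>.
Proof.
move=> _ [s [B [us [hs ->]]]].
elim: s us hs => [|j s IH] us hs.
  by rewrite bigcap_nil; exact: (@measurableT _ (g_sigma_algebraType (gens J))).
rewrite bigcap_cons.
have h1 : <<s gens J >> (Z j @^-1` B j).
  apply: sub_sigma_algebra; exists j, (B j); split; last split => //;
  by have [] := hs j (mem_head _ _).
have h2 : <<s gens J >> (\bigcap_(i in [set i | i \in s]) (Z i @^-1` B i)).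
  apply: IH; first by case/andP: us.
  by move=> i si; apply: hs; rewrite inE si orbT.
exact: (@measurableI _ (g_sigma_algebraType (gens J))).
Qed.

Lemma gens_sub_pis J : gens J `<=` pis J.
Proof.
move=> _ [j [B [Jj [mB ->]]]].
exists [:: j], (fun _ => B); split => //; split.
  by move=> i; rewrite inE => /eqP ->.
by rewrite bigcap_cons bigcap_nil setIT.
Qed.

Lemma pis_sigma J : <<s pis J >> = <<s gens J >>.
Proof.
apply/seteqP; split.
  apply: smallest_sub; first exact: smallest_sigma_algebra.
  exact: pis_sub_gen.
apply: smallest_sub; first exact: smallest_sigma_algebra.
move=> A /gens_sub_pis; exact: sub_sigma_algebra.
Qed.

Lemma pis_setI J : setI_closed (pis J).
Proof.
move=> _ _ [s1 [B1 [u1 [h1 ->]]]] [s2 [B2 [u2 [h2 ->]]]].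
exists (undup (s1 ++ s2)),
  (fun j => (if j \in s1 then B1 j else setT) `&` (if j \in s2 then B2 j else setT)).
split; first exact: undup_uniq.
split.
  move=> j; rewrite mem_undup mem_cat => /orP[js|js].
    have [Jj mB] := h1 j js; split => //; rewrite js.
    by case: ifP => js2; [apply: measurableI => //; have [] := h2 j js2|rewrite setIT].
  have [Jj mB] := h2 j js; split => //; rewrite js.
  by case: ifP => js1; [apply: measurableI => //; have [] := h1 j js1|rewrite setTI].
apply/seteqP; split => w.
  move=> [a1 a2] j /=; rewrite mem_undup mem_cat => _.
  split; first by case: ifP => // js; exact: a1.
  by case: ifP => // js; exact: a2.
move=> a; split => j /= js.
  have hj : (j \in undup (s1 ++ s2)) by rewrite mem_undup mem_cat js.
  by move: (a j hj) => []; rewrite /= js.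
have hj : (j \in undup (s1 ++ s2)) by rewrite mem_undup mem_cat js orbT.
by move: (a j hj) => [_]; rewrite /= js.
Qed.

Hypothesis hiid : iid P Z D.

Lemma pis_indep J k (A : set Om) (B : set Zsp) : ~ J k -> pis J A -> measurable B ->
  P (Z k @^-1` B `&` A) = (D B * P A)%E.
Proof.
move=> Jk [s [Bs [us [hs ->]]]] mB.
have [_ [hind hlaw]] := hiid.
have ks : k \notin s by apply/negP => /hs [].
pose B' := fun j => if j == k then B else Bs j.
have e1 : \bigcap_(j in [set j | j \in k :: s]) (Z j @^-1` B' j) =
   Z k @^-1` B `&` \bigcap_(j in [set j | j \in s]) (Z j @^-1` Bs j).
  rewrite bigcap_cons /B' eqxx; congr (_ `&` _).
  apply: eq_bigcapr => j /= js.
  by case: eqP => // ejk; move: ks; rewrite -ejk js.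
rewrite -e1 hind; last 2 first.
- by rewrite /= ks.
- move=> j; rewrite inE /B' => /orP[/eqP->|js]; first by rewrite eqxx.
  by case: eqP => _ //; have [] := hs j js.
rewrite big_cons /B' eqxx hlaw //; congr (_ * _)%E.
rewrite hind //; last by move=> j js; have [] := hs j js.
apply: eq_big_seq => j js.
by case: eqP => // ejk; move: ks; rewrite -ejk js.
Qed.

End pisys.
Section key.
Context (R : realType) (dO dZ dT : measure_display)
  (Om : measurableType dO) (Zsp : measurableType dZ) (Th : measurableType dT).
Variables (P : probability Om R) (Z : nat -> Om -> Zsp) (D : probability Zsp R).
Variable (l : Th -> Zsp -> R).
Hypothesis hlm : measurable_fun setT (fun p : Th * Zsp => l p.1 p.2).
Hypothesis hiid : iid P Z D.
Variables (thstar : Th) (om : R).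
Hypothesis hcen : forall th : Th,
  (\int[D]_z (expR (- om * (l th z - l thstar z)))%:E <= 1)%E.

Definition fl th z := expR (- om * (l th z - l thstar z)).

Lemma gen_meas J A : <<s gens Z J >> A -> measurable A.
Proof.
have [mZ _] := hiid.
apply: smallest_sub; first exact: sigma_algebra_measurable.
move=> _ [j [B [_ [mB ->]]]].
by rewrite -(setTI (Z j @^-1` B)); exact: mZ.
Qed.

Lemma mfl : measurable_fun setT (fun p : Th * Zsp => fl p.1 p.2).
Proof.
apply: measurableT_comp; first exact: measurable_expR.
apply: measurable_funM; first exact: measurable_cst.
apply: measurable_funB; first exact: hlm.
have -> : (fun p : Th * Zsp => l thstar p.2) =
   (fun p : Th * Zsp => l p.1 p.2) \o (fun p : Th * Zsp => (thstar, p.2)) by [].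
apply: measurableT_comp; first exact: hlm.
apply: measurable_fun_pair; first exact: measurable_cst.
exact: measurable_snd.
Qed.

Lemma key J k (H : Om -> R) (th : Om -> Th) : ~ J k ->
  (forall w, 0 <= H w) ->
  @measurable_fun _ _ (g_sigma_algebraType (gens Z J)) R setT H ->
  @measurable_fun _ _ (g_sigma_algebraType (gens Z J)) Th setT th ->
  (\int[P]_w (H w * fl (th w) (Z k w))%:E <= \int[P]_w (H w)%:E)%E.
Proof.
move=> Jk H0 mH mth.
have mH' : @measurable_fun _ _ (g_sigma_algebraType (pis Z J)) R setT H.
  move=> _ B mB; rewrite /measurable /= pis_sigma; exact: mH.
have mth' : @measurable_fun _ _ (g_sigma_algebraType (pis Z J)) Th setT th.
  move=> _ B mB; rewrite /measurable /= pis_sigma; exact: mth.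
have mid : @measurable_fun _ _ Om (g_sigma_algebraType (pis Z J)) setT id.
  move=> _ A mA; rewrite setTI; apply: gen_meas; rewrite -pis_sigma; exact: mA.
pose idJ : {mfun Om >-> (g_sigma_algebraType (pis Z J))} := HB.pack (id : Om -> (g_sigma_algebraType (pis Z J))) (isMeasurableFun.Build _ _ _ _ _ mid).
pose PJ := distribution P idJ.
have [mZ _] := hiid.
have mPhi : measurable_fun setT (fun w : Om => (Z k w, (w : (g_sigma_algebraType (pis Z J))))).
  exact: measurable_fun_pair.
pose Phi : {mfun Om >-> (Zsp * (g_sigma_algebraType (pis Z J)))%type} := HB.pack (fun w : Om => (Z k w, (w : (g_sigma_algebraType (pis Z J)))))
   (isMeasurableFun.Build _ _ _ _ _ mPhi).
pose nu := distribution P Phi.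
pose fphi (p : (Zsp * (g_sigma_algebraType (pis Z J)))%type) : \bar R := (H p.2 * fl (th p.2) p.1)%:E.
have mfphi : measurable_fun setT fphi.
  apply/measurable_EFinP; apply: measurable_funM.
    exact: measurableT_comp mH' (@measurable_snd _ _ Zsp (g_sigma_algebraType (pis Z J))).
  have -> : (fun p : (Zsp * (g_sigma_algebraType (pis Z J)))%type => fl (th p.2) p.1) =
    (fun q : (Th * Zsp)%type => fl q.1 q.2) \o (fun p : (Zsp * (g_sigma_algebraType (pis Z J)))%type => (th p.2, p.1)) by [].
  apply: measurableT_comp; first exact: mfl.
  apply: measurable_fun_pair; last exact: measurable_fst.
  exact: measurableT_comp mth' measurable_snd.
have fphi0 : forall p, (0 <= fphi p)%E.
  by move=> p; rewrite lee_fin mulr_ge0 // expR_ge0.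
pose G := [set X : set (Zsp * (g_sigma_algebraType (pis Z J)))%type | exists B, measurable B /\ exists A, pis Z J A /\ X = B `*` A].
have pism : forall A, pis Z J A -> measurable (A : set (g_sigma_algebraType (pis Z J))).
  by move=> A pA; exact: sub_sigma_algebra.
have mG : measurable = <<s G >>.
  rewrite measurable_prod_measurableType.
  apply/seteqP; split.
  - apply: smallest_sub; first exact: smallest_sigma_algebra.
    move=> _ [B mB [A mA <-]].
    pose F := [set A0 : set (g_sigma_algebraType (pis Z J)) | <<s G >> (B `*` A0)].
    suff : <<s pis Z J >> `<=` F by apply.
    apply: smallest_sub; last first.
      move=> A0 pA0; apply: sub_sigma_algebra; exists B; split => //; exists A0; split => //.
    split.
    + by rewrite /F /= setX0; exact: (@measurable0 _ (g_sigma_algebraType G)).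
    + move=> A0 FA0; rewrite /F /=.
      have -> : B `*` (setT `\` A0) = (B `*` setT) `\` (B `*` A0).
        by apply/seteqP; split => -[z t] /=; tauto.
      apply: (@measurableD _ (g_sigma_algebraType G)) => //.
      apply: sub_sigma_algebra; exists B; split => //; exists setT; split => //; exact: pisT.
    + move=> An FAn; rewrite /F /= setX_bigcupr.
      exact: (@bigcupT_measurable _ (g_sigma_algebraType G)).
  - apply: smallest_sub; first exact: smallest_sigma_algebra.
    move=> _ [B [mB [A [pA ->]]]]; apply: sub_sigma_algebra.
    by exists B => //; exists A => //; exact: pism.
have nuE : forall X, measurable X -> nu X = (D \x PJ)%E X.
  move=> X mX; apply: (measure_unique G (fun _ => setT)) => //.
  - move=> _ _ [B1 [mB1 [A1 [pA1 ->]]]] [B2 [mB2 [A2 [pA2 ->]]]].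
    rewrite -setXI; exists (B1 `&` B2); split; first exact: measurableI.
    by exists (A1 `&` A2); split => //; exact: pis_setI.
  - move=> _; exists setT; split => //; exists setT; split; first exact: pisT.
    by rewrite setXTT.
  - by rewrite bigcup_const.
  - move=> _ [B [mB [A [pA ->]]]].
    have pe := product_measure1E D PJ mB (pism _ pA).
    transitivity (D B * PJ A)%E; last exact: (esym pe).
    rewrite /nu /distribution /pushforward /PJ /distribution /pushforward /=.
    rewrite -(pis_indep hiid Jk pA mB); congr (P _).
  - move=> _; exact: (le_lt_trans (probability_le1 nu measurableT) (ltry 1)).
have e1 : (\int[P]_w (H w * fl (th w) (Z k w))%:E = \int[nu]_p fphi p)%E.
  by rewrite /nu ge0_integral_distribution.
have e2 : (\int[nu]_p fphi p = \int[D \x PJ]_p fphi p)%E.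
  by apply: (eq_measure_integral (D \x PJ)%E) => A mA _; exact: nuE.
have e4 : (\int[P]_w (H w)%:E = \int[PJ]_y (H y)%:E)%E.
  rewrite /PJ ge0_integral_distribution //; exact/measurable_EFinP.
rewrite e1 e2 (fubini_tonelli2 fphi mfphi fphi0) e4.
apply: ge0_le_integral => //.
- move=> y _; apply: integral_ge0 => x _; exact: fphi0.
- exact: measurable_fun_fubini_tonelli_G.
- exact/measurable_EFinP.
move=> y _; rewrite /fubini_G /fphi /=.
rewrite (eq_integral (fun x => (H y)%:E * (fl (th y) x)%:E)%E); last first.
  by move=> x _; rewrite EFinM.
rewrite ge0_integralZl_EFin //.
- rewrite -[leRHS]mule1; apply: lee_wpmul2l; first by rewrite lee_fin.
  exact: hcen.
- by move=> x _; rewrite lee_fin expR_ge0.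
- apply/measurable_EFinP.
  have -> : fl (th y) = (fun q : (Th * Zsp)%type => fl q.1 q.2) \o (fun x => (th y, x)) by [].
  apply: measurableT_comp; first exact: mfl.
  exact: measurable_fun_pair.
Qed.

End key.
Section tools.
Context (R : realType) (dO dZ : measure_display)
  (Om : measurableType dO) (Zsp : measurableType dZ).
Variables (P : probability Om R) (Z : nat -> Om -> Zsp).

Lemma gens_mono J1 J2 : J1 `<=` J2 -> <<s gens Z J1 >> `<=` <<s gens Z J2 >>.
Proof.
move=> J12; apply: smallest_sub; first exact: smallest_sigma_algebra.
move=> _ [j [B [J1j [mB ->]]]]; apply: sub_sigma_algebra.
by exists j, B; split => //; exact: J12.
Qed.

Lemma meas_piece (sg : Om -> nat) (F : nat -> Om -> R) :
  (forall k, measurable (sg @^-1` [set k])) ->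
  (forall k, measurable_fun setT (F k)) ->
  measurable_fun setT (fun w => F (sg w) w).
Proof.
move=> ms mF _ B mB; rewrite setTI.
have -> : (fun w => F (sg w) w) @^-1` B =
    \bigcup_k (sg @^-1` [set k] `&` F k @^-1` B).
  apply/seteqP; split => w /=.
    by move=> h; exists (sg w) => //.
  by move=> [k _ [/= -> h]].
apply: bigcupT_measurable => k; apply: measurableI => //.
by rewrite -(setTI (F k @^-1` B)); exact: mF.
Qed.

Lemma markovA (A : set Om) (g : Om -> R) (c : R) : measurable A ->
  measurable_fun setT g -> (forall w, 0 <= g w) -> (forall w, A w -> c <= g w) ->
  0 < c -> (c%:E * P A <= \int[P]_w (g w)%:E)%E.
Proof.
move=> mA mg g0 gA c0.
rewrite -integral_cst //.
apply: (@le_trans _ _ (\int[P]_(w in A) (g w)%:E)%E).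
  apply: ge0_le_integral => //.
  all: try (by move=> w _; rewrite lee_fin ltW).
  all: try (by apply/measurable_EFinP; exact: measurable_funTS mg).
  all: try (by move=> w Aw; rewrite lee_fin; exact: gA).
apply: ge0_subset_integral => //.
- by apply/measurable_EFinP.
- by move=> w _; rewrite lee_fin.
Qed.

Lemma markovB (A : set Om) (g : Om -> R) (c : R) : measurable A ->
  measurable_fun setT g -> (forall w, 0 <= g w) -> (forall w, A w -> c <= g w) ->
  0 < c -> (\int[P]_w (g w)%:E <= 1)%E -> (P A <= (c^-1)%:E)%E.
Proof.
move=> mA mg g0 gA c0 h1.
rewrite -[X in (_ <= X)%E]mule1 lee_pdivlMl //.
exact: le_trans (markovA mA mg g0 gA c0) h1.
Qed.

Lemma meas_ge (g : Om -> R) c : measurable_fun setT g ->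
  measurable [set w | c <= g w].
Proof.
move=> mg.
have -> : [set w | c <= g w] = setT `&` g @^-1` `[c, +oo[%classic.
  by apply/seteqP; split => w /=; rewrite in_itv /= andbT //; case.
exact: mg (measurable_itv _).
Qed.

End tools.
Section online.
Context (R : realType) (dO dZ dT : measure_display)
  (Om : measurableType dO) (Zsp : measurableType dZ) (Th : measurableType dT).
Variables (P : probability Om R) (Z : nat -> Om -> Zsp) (D : probability Zsp R).
Variable (l : Th -> Zsp -> R).
Hypothesis hlm : measurable_fun setT (fun p : Th * Zsp => l p.1 p.2).
Hypothesis hiid : iid P Z D.
Variables (thstar : Th) (om : R).
Hypothesis hcen : forall th : Th,
  (\int[D]_z (expR (- om * (l th z - l thstar z)))%:E <= 1)%E.
Variables (est : seq Zsp -> Th) (theta0 : Th).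
Hypothesis hest : forall k : nat, (0 < k)%N -> forall B : set Th, measurable B ->
        gen_sigma Z [set j | (j < k)%N] ((fun w => est (sample Z k w)) @^-1` B).

Local Notation TJ J := (g_sigma_algebraType (gens Z J)).

Definition thh i w := est_on est theta0 Z i w.
Definition Gn n w := G_on l est theta0 om Z n thstar w.

Lemma mthh i J : (forall j, (j < i)%N -> J j) ->
  @measurable_fun _ _ (TJ J) Th setT (thh i).
Proof.
move=> hJ; case: i hJ => [|i] hJ.
  exact: (@measurable_cst _ _ (TJ J) Th setT theta0).
move=> _ B mB; rewrite setTI /thh /est_on /=.
apply: (gens_mono (J1 := [set j | (j < i.+1)%N])) => //.
exact: hest.
Qed.

Lemma mZJ j J : J j -> @measurable_fun _ _ (TJ J) Zsp setT (Z j).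
Proof.
move=> Jj _ B mB; rewrite setTI; apply: sub_sigma_algebra; exists j, B; split => //.
Qed.

Lemma GnS n w : Gn n.+1 w = Gn n w * fl l thstar om (thh n w) (Z n w).
Proof.
by rewrite /Gn /G_on big_ord_recr /= mulrDr expRD /fl /thh.
Qed.

Lemma Gn0 w : Gn 0 w = 1.
Proof. by rewrite /Gn /G_on big_ord0 mulr0 expR0. Qed.

Lemma Gn_ge0 n w : 0 <= Gn n w.
Proof. exact: expR_ge0. Qed.

Lemma mfl_th n J : (forall j, (j <= n)%N -> J j) ->
  @measurable_fun _ _ (TJ J) R setT (fun w => fl l thstar om (thh n w) (Z n w)).
Proof.
move=> hJ.
have -> : (fun w => fl l thstar om (thh n w) (Z n w)) =
  (fun q : (Th * Zsp)%type => fl l thstar om q.1 q.2) \o (fun w => (thh n w, Z n w)) by [].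
apply: measurableT_comp; first exact: mfl.
apply: measurable_fun_pair; last exact: mZJ (hJ n (leqnn n)).
by apply: mthh => j /ltnW; exact: hJ.
Qed.

Lemma mGn n J : (forall j, (j < n)%N -> J j) ->
  @measurable_fun _ _ (TJ J) R setT (Gn n).
Proof.
elim: n => [|n IH] hJ.
  have -> : Gn 0 = fun _ => 1 by apply/funext => w; rewrite Gn0.
  exact: measurable_cst.
have -> : Gn n.+1 = fun w => Gn n w * fl l thstar om (thh n w) (Z n w).
  by apply/funext => w; rewrite GnS.
apply: measurable_funM.
  by apply: IH => j jn; apply: hJ; exact: ltnW.
by apply: mfl_th => j jn; apply: hJ.
Qed.

Lemma TJ_Om J (U : measurableType dT) (f : Om -> Th) :
  @measurable_fun _ _ (TJ J) Th setT f -> measurable_fun setT f.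
Proof. by move=> mf _ B mB; apply: (gen_meas hiid); exact: mf. Qed.

Lemma TJ_OmR J (f : Om -> R) :
  @measurable_fun _ _ (TJ J) R setT f -> measurable_fun setT f.
Proof. by move=> mf _ B mB; apply: (gen_meas hiid); exact: mf. Qed.

Lemma mGnOm n : measurable_fun setT (Gn n).
Proof. exact: (TJ_OmR (mGn (J := [set j | (j < n)%N]) (fun j h => h))). Qed.

Variable tau : Om -> nat.
Hypothesis htau : stopping_time Z tau.

Lemma tau_k_TJ k J : (forall j, (j < k)%N -> J j) -> <<s gens Z J >> (tau @^-1` [set k]).
Proof. by move=> hJ; apply: (gens_mono (J1 := [set j | (j < k)%N])) => //; exact: htau. Qed.

Lemma mtau_k k : measurable (tau @^-1` [set k]).
Proof. apply: (gen_meas hiid (J := [set j | (j < k)%N])); exact: htau. Qed.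

Lemma tau_gt N : <<s gens Z [set j | (j < N)%N] >> [set w | (N < tau w)%N].
Proof.
have -> : [set w | (N < tau w)%N] =
   ~` \bigcup_k (if (k <= N)%N then tau @^-1` [set k] else set0).
  apply/seteqP; split => w /=.
    move=> hN [k _]; case: ifP => // kN /= ek.
    by move: hN; rewrite ek ltnNge kN.
  move=> h; rewrite ltnNge; apply/negP => hle; apply: h; exists (tau w) => //.
  by rewrite hle.
apply: (@measurableC _ (TJ [set j | (j < N)%N])).
apply: bigcupT_measurable => k; case: ifP => kN.
  by apply: tau_k_TJ => j jk /=; exact: leq_trans jk kN.
exact: measurable0.
Qed.

Definition MN N w := Gn (minn (tau w) N) w.

Lemma mMN N : measurable_fun setT (MN N).
Proof.
exact: (meas_piece (F := fun k => Gn (minn k N)) mtau_k (fun k => mGnOm _)).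
Qed.

Lemma SN N : (\int[P]_w (MN N w)%:E <= 1)%E.
Proof.
elim: N => [|N IH].
  rewrite (eq_integral (cst 1%E)); last by move=> w _; rewrite /MN minn0 Gn0.
  by rewrite integral_cst // mul1e; exact: probability_le1.
pose Tgt := [set w | (N < tau w)%N].
have mTgtJ : @measurable _ (TJ [set j | (j < N)%N]) Tgt by exact: tau_gt.
have mTgt : measurable Tgt by exact: (gen_meas hiid mTgtJ).
pose a w := MN N w * \1_(~` Tgt) w.
pose H w := Gn N w * \1_Tgt w.
pose f w := fl l thstar om (thh N w) (Z N w).
have pt w : MN N.+1 w = a w + H w * f w /\ MN N w = a w + H w.
  rewrite /a /H /f /MN !indicE; case: (boolP (N < tau w)%N) => h.
    rewrite (mem_set (h : Tgt w)) (memNset (fun c : (~` Tgt) w => c h)).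
    rewrite (minn_idPr (h : (N.+1 <= tau w)%N)) (minn_idPr (ltnW h)) GnS.
    by split; rewrite mulr0 add0r mulr1.
  have h' : ~ Tgt w by move=> c; rewrite /Tgt /= c in h.
  rewrite (memNset h') (mem_set (h' : (~` Tgt) w)).
  have h1 : (tau w <= N)%N by rewrite leqNgt.
  rewrite (minn_idPl h1) (minn_idPl (leqW h1)).
  by split; rewrite mulr0 ?mul0r addr0 mulr1.
have a0 w : 0 <= a w by rewrite /a mulr_ge0 // ?Gn_ge0 // indicE ler0n.
have H0 w : 0 <= H w by rewrite /H mulr_ge0 // ?Gn_ge0 // indicE ler0n.
have f0 w : 0 <= f w by exact: expR_ge0.
have ma : measurable_fun setT a.
  by apply: measurable_funM; [exact: mMN|apply: measurable_indic; exact: measurableC].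
have mHJ : @measurable_fun _ _ (TJ [set j | (j < N)%N]) R setT H.
  apply: measurable_funM; first exact: mGn.
  exact: (@measurable_indic _ (TJ [set j | (j < N)%N])).
have mH : measurable_fun setT H := TJ_OmR mHJ.
have mf : measurable_fun setT f.
  by apply: (TJ_OmR (J := [set j | (j <= N)%N])); apply: mfl_th.
have e1 : (\int[P]_w (MN N.+1 w)%:E = \int[P]_w (a w)%:E + \int[P]_w (H w * f w)%:E)%E.
  rewrite -ge0_integralD //.
  - by apply: eq_integral => w _; rewrite (pt w).1 EFinD.
  - by move=> w _; rewrite lee_fin.
  - exact/measurable_EFinP.
  - by move=> w _; rewrite lee_fin mulr_ge0.
  - by apply/measurable_EFinP; exact: measurable_funM.
have e2 : (\int[P]_w (MN N w)%:E = \int[P]_w (a w)%:E + \int[P]_w (H w)%:E)%E.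
  rewrite -ge0_integralD //.
  - by apply: eq_integral => w _; rewrite (pt w).2 EFinD.
  - by move=> w _; rewrite lee_fin.
  - exact/measurable_EFinP.
  - by move=> w _; rewrite lee_fin.
  - exact/measurable_EFinP.
apply: le_trans IH; rewrite e1 e2; apply: leeD2l.
apply: (key hlm hiid hcen (J := [set j | (j < N)%N]) (k := N)) => //.
- by rewrite /= ltnn.
- by apply: mthh.
Qed.

Lemma tau_le N : measurable [set w | (tau w <= N)%N].
Proof.
have -> : [set w | (tau w <= N)%N] = ~` [set w | (N < tau w)%N].
  apply/seteqP; split => w /=.
    by rewrite leqNgt => /negP.
  by move=> h; rewrite leqNgt; apply/negP.
apply: measurableC; apply: (gen_meas hiid); exact: tau_gt.
Qed.

Lemma online_bound c : 0 < c ->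
  measurable [set w | c <= Gn (tau w) w] /\
  (P [set w | (c <= Gn (tau w) w)%R] <= (c^-1)%:E)%E.
Proof.
move=> c0.
have mG : measurable_fun setT (fun w => Gn (tau w) w).
  apply: (meas_piece (sg := tau) (F := Gn)); [move=> k; exact: mtau_k | move=> k; exact: mGnOm].
have mE : measurable [set w | c <= Gn (tau w) w] by exact: meas_ge.
split => //.
pose E_ N := [set w | c <= Gn (tau w) w] `&` [set w | (tau w <= N)%N].
have mEN N : measurable (E_ N) by apply: measurableI => //; exact: tau_le.
have hEN N : (P (E_ N) <= (c^-1)%:E)%E.
  apply: (markovB (g := MN N)) => //.
  - exact: mMN.
  - by move=> w; exact: Gn_ge0.
  - by move=> w [h1 /= h2]; rewrite /MN (minn_idPl h2).
  - exact: SN.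
have EU : [set w | c <= Gn (tau w) w] = \bigcup_N E_ N.
  apply/seteqP; split => w /=.
    by move=> h; exists (tau w) => //; split => //=.
  by move=> [N _ []].
have ndE : nondecreasing_seq E_.
  move=> n m nm; apply/subsetPset => w [h1 /= h2]; split => //=.
  exact: leq_trans h2 nm.
have mU : measurable (\bigcup_N E_ N) by rewrite -EU.
have hc := nondecreasing_cvg_mu (mu := P) mEN mU ndE.
rewrite EU -(cvg_lim _ hc) //; apply: lime_le.
  by apply/cvg_ex; eexists; exact: hc.
by apply: nearW => n; exact: hEN.
Qed.

End online.
Section offline.
Context (R : realType) (dO dZ dT : measure_display)
  (Om : measurableType dO) (Zsp : measurableType dZ) (Th : measurableType dT).
Variables (P : probability Om R) (Z : nat -> Om -> Zsp) (D : probability Zsp R).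
Variable (l : Th -> Zsp -> R).
Hypothesis hlm : measurable_fun setT (fun p : Th * Zsp => l p.1 p.2).
Hypothesis hiid : iid P Z D.
Variables (thstar : Th) (om : R).
Hypothesis hcen : forall th : Th,
  (\int[D]_z (expR (- om * (l th z - l thstar z)))%:E <= 1)%E.
Variables (est : seq Zsp -> Th) (n : nat) (I1 : {set 'I_n}).
Let J1 := [set j | exists i : 'I_n, i \in I1 /\ j = nat_of_ord i].
Hypothesis hest : forall B : set Th, measurable B ->
        gen_sigma Z J1 ((fun w => est (subsample Z I1 w)) @^-1` B).

Local Notation TJ J := (g_sigma_algebraType (gens Z J)).

Let th1 w := est (subsample Z I1 w).
Let Pr (s : seq nat) w := \prod_(i <- s) fl l thstar om (th1 w) (Z i w).

Lemma TJ_mono J J' (f : Om -> R) : J `<=` J' ->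
  @measurable_fun _ _ (TJ J) R setT f -> @measurable_fun _ _ (TJ J') R setT f.
Proof. by move=> JJ mf _ B mB; apply: (gens_mono JJ); exact: mf. Qed.

Lemma mth1 J : J1 `<=` J -> @measurable_fun _ _ (TJ J) Th setT th1.
Proof. by move=> JJ _ B mB; rewrite setTI; apply: (gens_mono JJ); exact: hest. Qed.

Lemma Pr_ind (s : seq nat) : uniq s -> (forall i, i \in s -> ~ J1 i) ->
  @measurable_fun _ _ (TJ (J1 `|` [set i | i \in s])) R setT (Pr s) /\
  (\int[P]_w (Pr s w)%:E <= 1)%E /\ (forall w, 0 <= Pr s w).
Proof.
elim: s => [|x s IH] us hs.
  have -> : Pr [::] = fun _ => 1 by apply/funext => w; rewrite /Pr big_nil.
  split; first exact: measurable_cst.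
  split => //.
  by rewrite integral_cst // mul1e; exact: probability_le1.
case/andP: us => xs us.
have [mP [iP P0]] := IH us (fun i hi => hs i (@mem_behead _ (x :: s) _ hi)).
pose J := J1 `|` [set i | i \in s].
have mth : @measurable_fun _ _ (TJ J) Th setT th1.
  by apply: mth1 => j; left.
have e : Pr (x :: s) = fun w => Pr s w * fl l thstar om (th1 w) (Z x w).
  by apply/funext => w; rewrite /Pr big_cons mulrC.
rewrite e; split; last split.
- apply: measurable_funM.
    by apply: TJ_mono mP => j [h|h]; [left|right; rewrite /= inE h orbT].
  have -> : (fun w => fl l thstar om (th1 w) (Z x w)) =
    (fun q : (Th * Zsp)%type => fl l thstar om q.1 q.2) \o (fun w => (th1 w, Z x w)) by [].
  apply: measurableT_comp; first exact: mfl.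
  apply: measurable_fun_pair.
    by apply: mth1 => j; left.
  move=> _ B mB; rewrite setTI; apply: sub_sigma_algebra; exists x, B; split => //.
  by right; rewrite /= inE eqxx.
- apply: le_trans iP.
  apply: (key hlm hiid hcen (J := J) (k := x)) => //.
  by move=> [h|h]; [exact: (hs x (mem_head _ _))|rewrite /= h in xs].
- by move=> w; rewrite mulr_ge0 // expR_ge0.
Qed.

Lemma Goff_Pr w : G_off l est om Z I1 thstar w = Pr [seq nat_of_ord i | i <- enum (~: I1)] w.
Proof.
rewrite /G_off /emp_risk /subsample !size_map -cardE /Pr big_map.
rewrite !big_map.
have [m0|mpos] := eqVneq #|~: I1| 0%N.
  have -> : enum (~: I1) = [::].
    by apply/eqP; rewrite -size_eq0 -cardE m0.
  by rewrite !big_nil m0 mulr0 mul0r expR0.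
rewrite -mulrBr mulrA mulfK ?pnatr_eq0 //.
rewrite -sumrB mulr_sumr expR_sum.
by apply: eq_bigr => i _.
Qed.

Lemma offline_bound c : 0 < c ->
  measurable [set w | (c <= G_off l est om Z I1 thstar w)%R] /\
  (P [set w | (c <= G_off l est om Z I1 thstar w)%R] <= (c^-1)%:E)%E.
Proof.
move=> c0.
have us : uniq [seq nat_of_ord i | i <- enum (~: I1)].
  by rewrite map_inj_uniq ?enum_uniq //; exact: val_inj.
have hs : forall i, i \in [seq nat_of_ord i | i <- enum (~: I1)] -> ~ J1 i.
  move=> _ /mapP [i iI ->] [i' [i'I ei]].
  move: iI; by rewrite mem_enum inE (ord_inj ei) i'I.
have [mP [iP P0]] := Pr_ind us hs.
have e : G_off l est om Z I1 thstar = Pr [seq nat_of_ord i | i <- enum (~: I1)].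
  by apply/funext => w; rewrite Goff_Pr.
have mG : measurable_fun setT (Pr [seq nat_of_ord i | i <- enum (~: I1)]).
  by move=> _ B mB; apply: (gen_meas hiid); exact: mP.
rewrite e; split; first by have := meas_ge c mG; apply.
apply: markovB.
- by have := meas_ge c mG; apply.
- exact: mG.
- exact: P0.
- by move=> w.
- exact: c0.
- exact: iP.
Qed.

End offline.
Lemma finish (R : realType) d (Om : measurableType d) (Th : Type)
  (P : probability Om R) (g : Th -> Om -> R) (thstar : Th) (alpha : R) :
  (forall th w, 0 <= g th w) ->
  measurable [set w | alpha^-1 <= g thstar w] ->
  (P [set w | (alpha^-1 <= g thstar w)%R] <= alpha%:E)%E ->
  (forall Th0 : set Th, Th0 thstar ->
     outer_prob_le P [set w | alpha^-1 <= G_set (fun th => g th w) Th0] alpha) /\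
  ((1 - alpha)%:E <= P [set w | [set th | (g th w < alpha^-1)%R] thstar])%E.
Proof.
move=> g0 mE hE; split.
  move=> Th0 h0; exists [set w | alpha^-1 <= g thstar w]; split => //; split => //.
  move=> w /= h; apply: le_trans h _; rewrite /G_set.
  apply: ge_inf; last by exists thstar.
  by exists 0 => _ [th _ <-]; exact: g0.
have -> : [set w | [set th | (g th w < alpha^-1)%R] thstar] =
    ~` [set w | alpha^-1 <= g thstar w].
  apply/seteqP; split => w /=.
    by rewrite ltNge => /negP.
  by move=> h; rewrite ltNge; apply/negP.
rewrite probability_setC // EFinB.
exact: leeB.
Qed.

Lemma stopping_cst dO dZ (Om : measurableType dO) (Zsp : measurableType dZ)
  (Z : nat -> Om -> Zsp) (n : nat) : stopping_time Z (fun _ => n).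
Proof.
move=> k; have [->|nk] := eqVneq n k.
  have -> : (fun _ : Om => k) @^-1` [set k] = setT by apply/seteqP; split.
  exact: (@measurableT _ (g_sigma_algebraType (gens Z [set j | (j < k)%N]))).
have -> : (fun _ : Om => n) @^-1` [set k] = set0.
  by apply/seteqP; split => w //= enk; rewrite enk eqxx in nk.
exact: (@measurable0 _ (g_sigma_algebraType (gens Z [set j | (j < k)%N]))).
Qed.
Unset Implicit Arguments.
Theorem theorem1
  (R : realType) (dO dZ dT : measure_display)
  (Om : measurableType dO) (Zsp : measurableType dZ) (Th : measurableType dT)
  (P : probability Om R) (Z : nat -> Om -> Zsp) (D : probability Zsp R)
  (l : Th -> Zsp -> R)
  (hl0 : forall th z, 0 <= l th z)
  (hlm : measurable_fun setT (fun p : Th * Zsp => l p.1 p.2))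
  (hiid : iid P Z D)
  (thstar : Th)
  (hmin : forall th : Th,
     (\int[D]_z (l thstar z)%:E <= \int[D]_z (l th z)%:E)%E)
  (ombar : R) (hombar : 0 < ombar)
  (hcentral : forall (th : Th) (o : R), 0 <= o < ombar ->
     (\int[D]_z (expR (- o * (l th z - l thstar z)))%:E <= 1)%E)
  (om : R) (hom : 0 <= om < ombar)
  (alpha : R) (halpha : 0 < alpha < 1) :
  (* online GUe-value *)
  (forall (est : seq Zsp -> Th) (theta0 : Th),
     is_AERM l est ->
     (forall k : nat, (0 < k)%N -> forall B : set Th, measurable B ->
        gen_sigma Z [set j | (j < k)%N]
          ((fun w => est (sample Z k w)) @^-1` B)) ->
     (forall n : nat,
        (forall Th0 : set Th, Th0 thstar ->
           outer_prob_le P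
             [set w | alpha^-1 <= G_set (fun th => G_on l est theta0 om Z n th w) Th0]
             alpha) /\
        ((1 - alpha)%:E <=
           P [set w | [set th | (G_on l est theta0 om Z n th w < alpha^-1)%R] thstar])%E) /\
     (forall tau : Om -> nat, stopping_time Z tau ->
        (forall Th0 : set Th, Th0 thstar ->
           outer_prob_le P
             [set w | alpha^-1 <= G_set (fun th => G_on l est theta0 om Z (tau w) th w) Th0]
             alpha) /\
        ((1 - alpha)%:E <=
           P [set w | [set th | (G_on l est theta0 om Z (tau w) th w < alpha^-1)%R] thstar])%E))
  /\
  (* offline GUe-value *)
  (forall (est : seq Zsp -> Th) (n : nat) (I1 : {set 'I_n}),
     is_AERM l est ->
     (0 < #|I1|)%N ->
     (forall B : set Th, measurable B ->
        gen_sigma Z [set j | exists i : 'I_n, i \in I1 /\ j = nat_of_ord i]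
          ((fun w => est (subsample Z I1 w)) @^-1` B)) ->
     (forall Th0 : set Th, Th0 thstar ->
        outer_prob_le P
          [set w | alpha^-1 <= G_set (fun th => G_off l est om Z I1 th w) Th0]
          alpha) /\
     ((1 - alpha)%:E <=
        P [set w | [set th | (G_off l est om Z I1 th w < alpha^-1)%R] thstar])%E).
Proof.
have hcen : forall th : Th,
    (\int[D]_z (expR (- om * (l th z - l thstar z)))%:E <= 1)%E.
  by move=> th; exact: hcentral.
have [a0 a1] := andP halpha.
have c0 : 0 < alpha^-1 by rewrite invr_gt0.
split.
  move=> est theta0 _ hest.
  have hstop : forall tau : Om -> nat, stopping_time Z tau ->
     (forall Th0 : set Th, Th0 thstar ->
        outer_prob_le P
          [set w | alpha^-1 <= G_set (fun th => G_on l est theta0 om Z (tau w) th w) Th0]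
          alpha) /\
     ((1 - alpha)%:E <=
        P [set w | [set th | (G_on l est theta0 om Z (tau w) th w < alpha^-1)%R] thstar])%E.
    move=> tau htau.
    have [mE hE] := online_bound hlm hiid hcen theta0 hest htau c0.
    rewrite invrK in hE.
    apply: (finish (g := fun th w => G_on l est theta0 om Z (tau w) th w)) => //.
    by move=> th w; exact: expR_ge0.
  split; last exact: hstop.
  move=> n; exact: (hstop (fun _ => n) (@stopping_cst _ _ _ _ Z n)).
move=> est n I1 _ _ hest.
have [mE hE] := offline_bound hlm hiid hcen hest c0.
rewrite invrK in hE.
apply: (finish (g := fun th w => G_off l est om Z I1 th w)) => //.
by move=> th w; exact: expR_ge0.
Qed.
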